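(* Let $V=\{v_0,\dots,v_{L-1}\}$ be a set of $L\ge1$ boolean variables and let $n_0,\dots,n_t$ ($t\ge1$) be a sequence of nodes, node $n_j$ carrying a state $s_j:V\to\{0,1\}$. Let $n^c=n_t$ (child) with state $s^c=s_t$ and $n^p=n_k$ (parent) for some $k\in\{0,\dots,t-1\}$, and suppose the states of $n^p$ and $n^c$ differ in exactly $e$ variables. For a node $n=n_m$ in the sequence define $\alpha_{0:t}(n)=\frac{1}{t}\sum_{i\in\{0,\dots,t\},i\ne m}\delta(n,n_i)$ with $\delta(n_m,n_i)=\frac1L\sum_{l=0}^{L-1}\mathbf{1}_{s_m(v_l)\neq s_i(v_l)}$. Let $\mu_{t-1}^{min}(n^c)=\min_{0\le l\le L-1}\frac{1}{t}|\{j\in\{0,\dots,t-1\}\mid s_j(v_l)=s^c(v_l)\}|$. If $\mu_{t-1}^{min}(n^c)=0$, then $$\alpha_{0:t}(n^c)\ge\alpha_{0:t}(n^p)-\frac{t-1}{t}\,\frac{e-2}{L}.$$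
   Context: $\delta$ is the normalized Hamming distance between node states; $\alpha_{0:t}(n)$ is the average normalized Hamming distance of a node of the sequence to all other nodes. The hypothesis $\mu_{t-1}^{min}(n^c)=0$ means that some variable takes in the child's state a value never observed among the states of $n_0,\dots,n_{t-1}$. *)

(* Defs.v *)
From mathcomp Require Import all_boot all_order all_algebra.
Set Implicit Arguments. Unset Strict Implicit. Unset Printing Implicit Defensive.
Import Order.TTheory GRing.Theory Num.Theory.
Local Open Scope ring_scope.

(* Nodes n_0..n_t are indexed by 'I_t.+1; variables v_0..v_{L-1} by 'I_L.
   s j l is the value s_j(v_l). *)

Definition delta (R : realFieldType) (L t : nat) (s : 'I_t.+1 -> 'I_L -> bool)
  (m i : 'I_t.+1) : R :=
  (\sum_(l < L) ((s m l != s i l) : nat)%:R) / L%:R.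

Definition alpha (R : realFieldType) (L t : nat) (s : 'I_t.+1 -> 'I_L -> bool)
  (m : 'I_t.+1) : R :=
  (\sum_(i < t.+1 | i != m) delta R s m i) / t%:R.

Definition agree_count (L t : nat) (s : 'I_t.+1 -> 'I_L -> bool) (l : 'I_L) : nat :=
  #|[pred j : 'I_t.+1 | (j < t)%N && (s j l == s ord_max l)]|.

(* mu^{min}_{t-1}(n^c) = min_l (1/t) |{...}|; the seed t is harmless since
   every count is <= t (and L >= 1 in the theorem). *)
Definition mu_min (R : realFieldType) (L t : nat) (s : 'I_t.+1 -> 'I_L -> bool) : R :=
  (\big[minn/t]_(l < L) agree_count s l)%:R / t%:R.

(* Main.v *)
Require Import Defs.
From mathcomp Require Import all_boot all_order all_algebra.
From mathcomp Require Import ring lra zify.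
Import Order.TTheory GRing.Theory Num.Theory.
Local Open Scope ring_scope.

Lemma bigmin_zero L t (f : 'I_L -> nat) : (0 < t)%N ->
  \big[minn/t]_(l < L) f l = 0%N -> exists l, f l = 0%N.
Proof.
move=> t0 H; case: (pickP (fun l => f l == 0%N)) => [l /eqP|Hn]; first by exists l.
suff : (0 < \big[minn/t]_(l < L) f l)%N by rewrite H.
apply: (big_ind (fun x => 0 < x)%N) => //.
  by move=> x y; rewrite leq_min => -> ->.
by move=> i _; rewrite lt0n Hn.
Qed.

Lemma delta_self (R : realFieldType) L t (s : 'I_t.+1 -> 'I_L -> bool) m :
  delta R s m m = 0.
Proof. by rewrite /delta big1 ?mul0r // => l _; rewrite eqxx. Qed.

Lemma alpha_full (R : realFieldType) L t (s : 'I_t.+1 -> 'I_L -> bool) m :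
  alpha R s m = (\sum_i delta R s m i) / t%:R.
Proof. by rewrite /alpha [X in _ = X / _](bigD1 m) //= delta_self add0r. Qed.

Lemma card_sum L (P : pred 'I_L) : #|P| = (\sum_(l < L) (P l : nat))%N.
Proof. rewrite -sum1_card big_mkcond /=; apply: eq_bigr => l _; by rewrite unfold_in; case: (P l). Qed.

Lemma sumD1 L (l0 : 'I_L) (g : 'I_L -> nat) :
  (\sum_(l < L) g l = g l0 + \sum_(l < L | l != l0) g l)%N.
Proof. by rewrite (bigD1 l0). Qed.

Theorem theorem6 (R : realFieldType) (L t : nat)
  (s : 'I_t.+1 -> 'I_L -> bool) (k : 'I_t.+1) (e : nat) :
  (0 < L)%N -> (0 < t)%N -> (k < t)%N ->
  #|[pred l : 'I_L | s k l != s ord_max l]| = e ->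
  mu_min R s = 0 ->
  alpha R s ord_max >= alpha R s k - (t%:R - 1) / t%:R * ((e%:R - 2) / L%:R).
Proof.
move=> L0 t0 kt He Hmu.
have tR : (t%:R : R) != 0 by rewrite pnatr_eq0 -lt0n.
have LR : (0 : R) < L%:R by rewrite ltr0n.
have [l0 Hl0] : exists l0, agree_count s l0 = 0%N.
  apply: (@bigmin_zero L t (agree_count s) t0); apply/eqP; rewrite -(pnatr_eq0 R).
  by move: Hmu; rewrite /mu_min => /eqP; rewrite mulf_eq0 invr_eq0 (negPf tR) orbF.
have Hdiff : forall j : 'I_t.+1, (j < t)%N -> s j l0 != s ord_max l0.
  move=> j jt; apply/negP => E.
  move: Hl0; rewrite /agree_count => /card0_eq/(_ j).
  by rewrite !inE jt E.
have kmax : k != ord_max by rewrite -val_eqE /= neq_ltn kt.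
have He' : (\sum_(l < L) (s k l != s ord_max l : nat))%N = e by rewrite -He card_sum.
have dkm : delta R s k ord_max = e%:R / L%:R by rewrite /delta -He' natr_sum.
have dmk : delta R s ord_max k = e%:R / L%:R.
  by rewrite /delta -He' natr_sum; congr (_ / _); apply: eq_bigr => l _; rewrite eq_sym.
set c : R := (e%:R - 2) / L%:R.
have Hterm : forall i : 'I_t.+1, i != ord_max -> i != k ->
    delta R s k i - delta R s ord_max i <= c.
  move=> i im ik.
  have it : (i < t)%N by move: im (ltn_ord i); rewrite -val_eqE /= ltnS leq_eqVlt => /negPf ->.
  have Hi := Hdiff i it; have Hk := Hdiff k kt.
  have N : ((\sum_(l < L) (s k l != s i l : nat)) + 2 <=
            (\sum_(l < L) (s ord_max l != s i l : nat)) + e)%N.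
    rewrite -He'.
    have D := @sumD1 L l0.
    rewrite (D (fun l => (s k l != s i l : nat))) (D (fun l => (s ord_max l != s i l : nat)))
            (D (fun l => (s k l != s ord_max l : nat))).
    have Hs : (\sum_(l < L | l != l0) (s k l != s i l : nat) <=
      \sum_(l < L | l != l0) (s ord_max l != s i l : nat) +
      \sum_(l < L | l != l0) (s k l != s ord_max l : nat))%N
      by (rewrite -big_split /=; apply: leq_sum => l _;
         move: (s k l) (s i l) (s ord_max l) => [] [] []).
    have E1 : (s k l0 != s i l0) = false by move: Hi Hk; case: (s i l0); case: (s k l0); case: (s ord_max l0).
    have E2 : (s ord_max l0 != s i l0) = true by move: Hi; case: (s i l0); case: (s ord_max l0).
    rewrite E1 E2 Hk; simpl nat_of_bool; lia.
  rewrite /delta /c -mulrBl; apply: ler_wpM2r; first by rewrite invr_ge0 ler0n.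
  have := N; rewrite -(ler_nat R) !natrD -!natr_sum => NR.
  lra.
have Hsum : \sum_i delta R s k i - \sum_i delta R s ord_max i <= (t%:R - 1) * c.
  rewrite -sumrB (bigD1 ord_max) //= (bigD1 k) //= delta_self dkm dmk.
  have Hc : \sum_(i < t.+1 | (i != ord_max) && (i != k)) c = (t%:R - 1) * c.
    have Hs : \sum_(i < t.+1) c = c *+ t.+1 by rewrite sumr_const card_ord.
    rewrite (bigD1 ord_max) //= (bigD1 k) //= in Hs.
    have Hs' : \sum_(i < t.+1 | (i != ord_max) && (i != k)) c = c *+ t.+1 - c - c.
      by rewrite -Hs; ring.
    by rewrite Hs' mulrS -mulr_natr; ring.
  have : \sum_(i < t.+1 | (i != ord_max) && (i != k)) (delta R s k i - delta R s ord_max i)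
         <= \sum_(i < t.+1 | (i != ord_max) && (i != k)) c.
    by apply: ler_sum => i /andP [im ik]; apply: Hterm.
  rewrite Hc delta_self; lra.
rewrite !alpha_full.
have tpos : (0 : R) < t%:R^-1 by rewrite invr_gt0 ltr0n.
have := ler_wpM2r (ltW tpos) Hsum.
rewrite mulrBl -/c [(t%:R - 1) / t%:R * c]mulrAC.
set A := _ * t%:R^-1; set B := _ * t%:R^-1; set C := _ * t%:R^-1.
move=> H; rewrite /A /B /C in H *. lra.
Qed.
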